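(* Let $L,d\in \mathbb{N}$, $q\in [1,\infty]$, $c\in (0,\infty)$, and $N_1,\dots , N_{L-1}\in \mathbb{N}$. Then for every $m\in\mathbb{N}$, \[ \mathrm{err}_m^{MC}\left(\mathcal{H}_{(d,N_1,\dots , N_{L-1},1),c}^q,L^\infty([0,1]^d)\right) \le \begin{cases} 2\sqrt{d}\cdot c^L\cdot m^{-\frac1d} & \text{if } q\le 2, \\ 2\sqrt{d}\cdot c^L\cdot (\sqrt{d}\cdot N_1 \cdots N_{L-1})^{1-\frac{2}{q}}\cdot m^{-\frac1d} & \text{if } q\geq 2 .\end{cases} \]
   Context: ReLU: $\varrho(x)=\max\{0,x\}$, applied componentwise. For an architecture $(N_0,\dots,N_L)$ and coefficients $\Phi=((W^i,b^i))_{i=1}^L$ with $W^i\in\mathbb{R}^{N_i\times N_{i-1}}$, $b^i\in\mathbb{R}^{N_i}$, the realization is $R(\Phi)(x)=x^L$ with $x^0=x$, $x^i=\varrho(W^ix^{i-1}+b^i)$ for $1\le i\le L-1$, $x^L=W^Lx^{L-1}+b^L$. $\|\cdot\|_{\ell^q}$ of a matrix/vector is the entrywise $\ell^q$ norm, $\|\Phi\|_{\ell^q}=\max_i\max\{\|W^i\|_{\ell^q},\|b^i\|_{\ell^q}\}$, and $\mathcal{H}^q_{(N_0,\dots,N_L),c}=\{R(\Phi):\|\Phi\|_{\ell^q}\le c\}$, viewed as functions on $[0,1]^{N_0}$. Here $N_0=d$, $N_L=1$; $2/q=0$ for $q=\infty$. Algorithms: for a Banach space $Y$ and $U\subset C([0,1]^d)\cap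 Y$, $A:U\to Y$ is an adaptive deterministic method using $m$ point samples if there are $f_1\in[0,1]^d$, maps $f_i:([0,1]^d)^{i-1}\times\mathbb{R}^{i-1}\to[0,1]^d$ and $Q:([0,1]^d)^m\times\mathbb{R}^m\to Y$ such that, with $x_1=f_1$, $x_i=f_i(x_1,\dots,x_{i-1},u(x_1),\dots,u(x_{i-1}))$, $A(u)=Q(x_1,\dots,x_m,u(x_1),\dots,u(x_m))$ for all $u\in U$; these form $\mathrm{Alg}_m(U,Y)$. An adaptive random method using $m$ samples on average is $(\mathbf{A},\mathbf{m})$, $\mathbf{A}=(A_\omega)_{\omega\in\Omega}$ on a probability space, $\mathbf{m}:\Omega\to\mathbb{N}$ measurable with $\mathbb{E}[\mathbf{m}]\le m$, $\omega\mapsto A_\omega(u)$ Borel measurable for each $u$, and $A_\omega\in\mathrm{Alg}_{\mathbf{m}(\omega)}(U,Y)$; these form $\mathrm{Alg}^{MC}_m(U,Y)$. Then $\mathrm{err}^{MC}_m(U,Y)=\inf_{(\mathbf{A},\mathbf{m})\in\mathrm{Alg}^{MC}_m(U,Y)}\sup_{u\in U}\mathbb{E}[\|u-A_\omega(u)\|_Y]$. *)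

(* Defs.v *)
From HB Require Import structures.
From mathcomp Require Import all_boot all_order all_algebra.
From mathcomp Require Import all_classical all_reals all_analysis.
Unset Printing Implicit Defensive.
Import Order.TTheory GRing.Theory Num.Theory.
Import numFieldNormedType.Exports.
Local Open Scope classical_set_scope.
Local Open Scope ring_scope.

Section NNDefs.
Context {R : realType}.

Definition relu (x : R) : R := Num.max 0 x.

Definition lq_norm (q : \bar R) (I : finType) (a : I -> R) : R :=
  match q with
  | EFin r => powR (\sum_i powR `|a i| r) r^-1
  | _ => \big[Num.max/0]_i `|a i|
  end.
Arguments lq_norm q {I}.

Definition mx_lq (q : \bar R) (m n : nat) (A : 'M[R]_(m, n)) : R :=
  lq_norm q (fun ij : 'I_m * 'I_n => A ij.1 ij.2).
Arguments mx_lq q {m n}.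

(** architecture (N_0, N_1, ..., N_{L-1}, N_L) with N_0 = d; the output
    layer N_L = 1 is handled separately below *)
Definition arch (d : nat) (Ns : nat -> nat) (i : nat) : nat :=
  if i is 0 then d else Ns i.

(** network coefficients Phi = ((W^i,b^i))_{i=1..L}; here layer i (paper)
    is stored at index i-1 for i <= L-1, and the last layer (W^L,b^L) with
    W^L in R^{1 x N_{L-1}}, b^L in R^1 separately.  Entries of nn_W/nn_b with
    index >= L-1 are unused. *)
Record nnet (d : nat) (Ns : nat -> nat) (L : nat) := NNet {
  nn_W : forall i : nat, 'M[R]_(arch d Ns i.+1, arch d Ns i);
  nn_b : forall i : nat, 'cV[R]_(arch d Ns i.+1);
  nn_WL : 'M[R]_(1, arch d Ns L.-1);
  nn_bL : 'cV[R]_1 }.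
Arguments nn_W {d Ns L}. Arguments nn_b {d Ns L}.
Arguments nn_WL {d Ns L}. Arguments nn_bL {d Ns L}.

Fixpoint nn_hidden d Ns L (Phi : nnet d Ns L) (x : 'cV[R]_d) (k : nat)
  : 'cV[R]_(arch d Ns k) :=
  match k return 'cV[R]_(arch d Ns k) with
  | 0 => x
  | k'.+1 => map_mx relu (nn_W Phi k' *m nn_hidden d Ns L Phi x k' + nn_b Phi k')
  end.

Definition realize d Ns L (Phi : nnet d Ns L) (x : 'cV[R]_d) : R :=
  (nn_WL Phi *m nn_hidden d Ns L Phi x L.-1 + nn_bL Phi) ord0 ord0.

Definition nn_norm_le d Ns L (q : \bar R) (c : R) (Phi : nnet d Ns L) : Prop :=
  (forall i : nat, (i < L.-1)%N ->
      mx_lq q (nn_W Phi i) <= c /\ mx_lq q (nn_b Phi i) <= c) /\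
  mx_lq q (nn_WL Phi) <= c /\ mx_lq q (nn_bL Phi) <= c.

Definition Hclass (q : \bar R) (d : nat) (Ns : nat -> nat) (L : nat) (c : R)
  : set ('cV[R]_d -> R) :=
  [set f | exists Phi : nnet d Ns L, nn_norm_le d Ns L q c Phi /\ f = realize d Ns L Phi].

Definition cube (d : nat) : set 'cV[R]_d := [set x | forall i, 0 <= x i 0 <= 1].

(** Lebesgue null sets of R^d (Lebesgue outer measure zero, via countable
    covers by closed boxes) *)
Definition lnull (d : nat) (N : set 'cV[R]_d) : Prop :=
  forall eps : R, 0 < eps ->
  exists a b : nat -> 'cV[R]_d,
    (forall k i, a k i 0 <= b k i 0) /\
    N `<=` \bigcup_k [set x | forall i, a k i 0 <= x i 0 <= b k i 0] /\
    (forall n, \sum_(k < n) \prod_i (b k i 0 - a k i 0) <= eps).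

(** the L^infty([0,1]^d) (semi)norm: essential supremum on the cube *)
Definition Linf_norm (d : nat) (g : 'cV[R]_d -> R) : \bar R :=
  ereal_inf [set M%:E | M in [set M : R | lnull d (cube d `&` [set x | M < `|g x|])]].

Definition borel (d : nat) (A : set 'cV[R]_d) : Prop :=
  smallest (sigma_algebra setT) [set O : set 'cV[R]_d | open O] A.

(** representatives of elements of Y = L^infty([0,1]^d): Borel measurable on
    the cube and essentially bounded *)
Definition Linf (d : nat) : set ('cV[R]_d -> R) :=
  [set g | (forall a : R, borel d (cube d `&` [set x | a < g x])) /\
           (Linf_norm d g < +oo)%E].

Definition Linf_open (d : nat) (O : set ('cV[R]_d -> R)) : Prop :=
  forall g, Linf d g -> O g -> exists r : R, 0 < r /\
    forall h, Linf d h -> (Linf_norm d (g \- h)%R < r%:E)%E -> O h.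

Fixpoint samples (d : nat) (f : seq ('cV[R]_d * R) -> 'cV[R]_d)
  (u : 'cV[R]_d -> R) (k : nat) : seq ('cV[R]_d * R) :=
  match k with
  | 0 => [::]
  | k'.+1 => let s := samples d f u k' in rcons s (f s, u (f s))
  end.

Definition det_alg (d : nat) (U : set ('cV[R]_d -> R)) (m : nat)
  (A : ('cV[R]_d -> R) -> ('cV[R]_d -> R)) : Prop :=
  exists (f : seq ('cV[R]_d * R) -> 'cV[R]_d)
         (Q : seq ('cV[R]_d * R) -> ('cV[R]_d -> R)),
    (forall s, cube d (f s)) /\ (forall s, Linf d (Q s)) /\
    (forall u, U u -> A u = Q (samples d f u m)).

Definition mc_alg (d : nat) (U : set ('cV[R]_d -> R)) (m : nat)
  (d0 : measure_display) (Omega : measurableType d0) (P : probability Omega R)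
  (A : Omega -> ('cV[R]_d -> R) -> ('cV[R]_d -> R)) (mm : Omega -> nat) : Prop :=
  (forall n : nat, measurable [set w | mm w = n]) /\
  (\int[P]_w ((mm w)%:R)%:E <= (m%:R)%:E)%E /\
  (forall u, U u -> forall O, Linf_open d O -> measurable [set w | O (A w u)]) /\
  (forall w, det_alg d U (mm w) (A w)).

Definition errMC (d : nat) (U : set ('cV[R]_d -> R)) (m : nat) : \bar R :=
  ereal_inf [set e | exists (d0 : measure_display) (Omega : measurableType d0)
      (P : probability Omega R) (A : Omega -> ('cV[R]_d -> R) -> ('cV[R]_d -> R))
      (mm : Omega -> nat),
      mc_alg d U m d0 Omega P A mm /\
      e = ereal_sup [set (\int[P]_w Linf_norm d (u \- A w u)%R)%E | u in U]].

Definition qexp (q : \bar R) : R :=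
  match q with EFin r => 1 - 2 / r | _ => 1 end.

End NNDefs.

(* Main.v *)
Require Import Defs.
From HB Require Import structures.
From mathcomp Require Import all_boot all_order all_algebra.
From mathcomp Require Import all_classical all_reals all_analysis.
From mathcomp Require Import zify ring lra.
Import Order.TTheory GRing.Theory Num.Theory.
Import numFieldNormedType.Exports.
Local Open Scope classical_set_scope.
Local Open Scope ring_scope.

Section A.
Context {R : realType}.

Lemma lq_norm_ge0 (q : \bar R) (I : finType) (a : I -> R) : 0 <= lq_norm q I a.
Proof.
case: q => [r| |] /=; first exact: powR_ge0.
- by apply: (big_ind (fun x => 0 <= x)) => // x y; rewrite le_max => ->.
- by apply: (big_ind (fun x => 0 <= x)) => // x y; rewrite le_max => ->.
Qed.

Lemma single_le_sum (I : finType) (F : I -> R) (i : I) :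
  (forall j, 0 <= F j) -> F i <= \sum_j F j.
Proof.
move=> F0; rewrite (bigD1 i) //= lerDl; exact: sumr_ge0.
Qed.

Lemma sq_abs (x : R) : `|x| ^+ 2 = x ^+ 2.
Proof. by rewrite real_normK ?num_real. Qed.

Lemma lq_sq_le2 (q : \bar R) (I : finType) (a : I -> R) :
  (1 <= q)%E -> (q <= 2%:E)%E -> \sum_i (a i) ^+ 2 <= (lq_norm q I a) ^+ 2.
Proof.
case: q => [r| |] //= r1 r2; rewrite ?lee_fin in r1 r2 => //.
set S := \sum_i `|a i| `^ r.
set T := S `^ r^-1.
have r0 : 0 < r by apply: lt_le_trans r1.
have S0 : 0 <= S by apply: sumr_ge0 => i _; exact: powR_ge0.
have aT i : `|a i| <= T.
  have -> : `|a i| = (`|a i| `^ r) `^ r^-1.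
    by rewrite -powRrM mulfV ?gt_eqF // powRr1.
  apply: ge0_ler_powR; rewrite ?nnegrE ?invr_ge0 ?powR_ge0 ?(ltW r0) //.
  rewrite /S (bigD1 i) //= lerDl; apply: sumr_ge0 => j _; exact: powR_ge0.
have key i : a i ^+ 2 <= `|a i| `^ r * T `^ (2 - r).
  rewrite -sq_abs -powR_mulrn //.
  have -> : `|a i| `^ 2%:R = `|a i| `^ r * `|a i| `^ (2 - r).
    by rewrite -powRD ?subrKC // pnatr_eq0.
  apply: ler_wpM2l; first exact: powR_ge0.
  apply: ge0_ler_powR; rewrite ?nnegrE ?subr_ge0 //.
  exact: le_trans (aT i).
apply: le_trans (ler_sum _ (fun i _ => key i)) _.
rewrite -mulr_suml -/S.
have -> : S = T `^ r by rewrite -powRrM mulVf ?gt_eqF // powRr1.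
rewrite -powRD; last by rewrite subrKC pnatr_eq0.
by rewrite subrKC powR_mulrn // powR_ge0.
Qed.

End A.


Section B.
Context {R : realType}.
Local Open Scope convex_scope.

Lemma jensen_seq (p : R) (J : Type) (r : seq J) (b : J -> R) :
  1 <= p -> (forall j, 0 <= b j) -> (0 < size r)%N ->
  ((\sum_(j <- r) b j) / (size r)%:R) `^ p <= (\sum_(j <- r) b j `^ p) / (size r)%:R.
Proof.
move=> p1 b0; elim: r => [//|j r IH] _.
case: r IH => [|j' r'] IH.
  by rewrite !big_cons !big_nil /= !addr0 !divr1.
move: IH; set r := j' :: r' => IH.
have {}IH := IH isT.
pose k : R := (size r)%:R.
have k0 : 0 < k by rewrite /k ltr0n.
have Sk : (size (j :: r))%:R = k + 1 by rewrite /= -addn1 natrD.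
rewrite Sk [\sum_(i <- j :: r) b i]big_cons [\sum_(i <- j :: r) b i `^ p]big_cons.
rewrite -/k in IH; clearbody k.
set X := (\sum_(j <- r) b j) / k.
have X0 : 0 <= X.
  by apply: divr_ge0; [apply: sumr_ge0 => i _; exact: b0 | exact: ltW].
have k10 : 0 < k + 1 by rewrite addr_gt0.
have t0 : 0 <= k / (k + 1) by apply: divr_ge0; exact: ltW.
have t1 : k / (k + 1) <= 1 by rewrite ler_pdivrMr // mul1r lerDl.
pose t := Itv01 t0 t1.
have hX : X \in (`[0, +oo[%classic : set R) by rewrite inE /= in_itv /= andbT.
have hy : b j \in (`[0, +oo[%classic : set R) by rewrite inE /= in_itv /= andbT.
have H := convex_powR p1 t hX hy.
move: H; rewrite convRE [X in X `^ _ <= _ -> _]convRE /= => H.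
have -> : (b j + \sum_(j <- r) b j) / (k + 1) = k / (k + 1) * X + (1 - k / (k + 1)) * b j.
  rewrite /X; field; by rewrite ?(gt_eqF k0) ?(gt_eqF k10).
have H' : (k / (k + 1) * X + (1 - k / (k + 1)) * b j) `^ p <=
    k / (k + 1) * X `^ p + (1 - k / (k + 1)) * b j `^ p := H.
apply: (le_trans H').
have e : 1 - k / (k + 1) = 1 / (k + 1) by field; rewrite ?(gt_eqF k0) ?(gt_eqF k10).
rewrite e.
have -> : (b j `^ p + \sum_(j <- r) b j `^ p) / (k + 1)
        = k / (k + 1) * ((\sum_(j <- r) b j `^ p) / k) + 1 / (k + 1) * b j `^ p.
  field; by rewrite ?(gt_eqF k0) ?(gt_eqF k10).
rewrite lerD2r; apply: ler_wpM2l => //.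
Qed.

Lemma lq_sq_ge2 (q : \bar R) (I : finType) (a : I -> R) :
  (2%:E <= q)%E ->
  \sum_i (a i) ^+ 2 <= (#|I|%:R) `^ (qexp q) * (lq_norm q I a) ^+ 2.
Proof.
case: q => [r| |] //= r2; last first.
  rewrite powRr1 ?ler0n //.
  set M := \big[Num.max/0]_i `|a i|.
  have aM i : a i ^+ 2 <= M ^+ 2.
    rewrite -sq_abs ler_pXn2r ?nnegrE //; last by apply: lq_norm_ge0 +oo%E I a.
    exact: le_bigmax.
  apply: le_trans (ler_sum _ (fun i _ => aM i)) _.
  by rewrite sumr_const mulr_natl.
rewrite lee_fin in r2.
have r0 : 0 < r by apply: lt_le_trans r2.
set S := \sum_i `|a i| `^ r.
set T := S `^ r^-1.
have S0 : 0 <= S by apply: sumr_ge0 => i _; exact: powR_ge0.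
have [n0|nP] := eqVneq #|I| 0%N.
  rewrite big1 ?mulr_ge0 ?powR_ge0 ?sqr_ge0 // => i _.
  by have := card0_eq n0 i; rewrite !inE.
set n := #|I|%:R.
have n0 : 0 < n by rewrite /n ltr0n lt0n.
set p := r / 2.
have p1 : 1 <= p by rewrite /p ler_pdivlMr // mul1r.
have p0 : 0 < p by apply: lt_le_trans p1.
set mu := (\sum_i a i ^+ 2) / n.
have mu0 : 0 <= mu.
  by apply: divr_ge0; [apply: sumr_ge0 => i _; exact: sqr_ge0 | exact: ltW].
have J : mu `^ p <= S / n.
  have := @jensen_seq p I (index_enum I) (fun i => a i ^+ 2) p1 (fun i => sqr_ge0 _).
  have sz : size (index_enum I) = #|I| by rewrite cardT enumT.
  rewrite sz lt0n nP => /(_ isT) H.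
  apply: le_trans H _; rewrite /S; apply: ler_wpM2r; first by rewrite invr_ge0 (ltW n0).
  apply: ler_sum => i _.
  by rewrite -sq_abs -powR_mulrn // -powRrM /p mulrC divfK ?pnatr_eq0.
have mu_le : mu <= (S / n) `^ p^-1.
  have -> : mu = (mu `^ p) `^ p^-1 by rewrite -powRrM mulfV ?gt_eqF // powRr1.
  apply: ge0_ler_powR; rewrite ?nnegrE ?invr_ge0 ?powR_ge0 ?(ltW p0) //.
  by rewrite divr_ge0 // (ltW n0).
have nV e : (n^-1) `^ e = (n `^ e)^-1.
  apply: (@mulfI _ (n `^ e)); first by rewrite powR_eq0 gt_eqF.
  by rewrite -powRM ?invr_ge0 ?(ltW n0) // mulfV ?gt_eqF // powR1 mulfV // powR_eq0 gt_eqF.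
have E1 : (S / n) `^ p^-1 = T ^+ 2 / n `^ (2 / r).
  rewrite powRM ?invr_ge0 ?(ltW n0) // nV.
  by rewrite /T -powR_mulrn ?powR_ge0 // -powRrM /p invf_div [r^-1 * _]mulrC.
rewrite E1 in mu_le.
have -> : \sum_i a i ^+ 2 = n * mu by rewrite /mu mulrC divfK ?gt_eqF.
have -> : n `^ (1 - 2 / r) = n / n `^ (2 / r).
  rewrite powRB; first by rewrite powRr1 // (ltW n0).
  by apply/implyP => _; rewrite gt_eqF.
rewrite (_ : n / n `^ (2 / r) * T ^+ 2 = n * (T ^+ 2 / n `^ (2 / r))).
  by rewrite ler_pM2l.
by rewrite mulrA mulrAC.
Qed.

End B.


Section C.
Context {R : realType}.

Definition sqn {n} (v : 'cV[R]_n) : R := \sum_i (v i ord0) ^+ 2.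
Definition fro {m n} (W : 'M[R]_(m, n)) : R :=
  \sum_(ij : 'I_m * 'I_n) (W ij.1 ij.2) ^+ 2.

Lemma sqn_ge0 {n} (v : 'cV[R]_n) : 0 <= sqn v.
Proof. by apply: sumr_ge0 => i _; exact: sqr_ge0. Qed.

Lemma fro_ge0 {m n} (W : 'M[R]_(m, n)) : 0 <= fro W.
Proof. by apply: sumr_ge0 => i _; exact: sqr_ge0. Qed.

Lemma CS {I : finType} (a b : I -> R) :
  (\sum_i a i * b i) ^+ 2 <= (\sum_i a i ^+ 2) * (\sum_i b i ^+ 2).
Proof.
set Sa := \sum_i a i ^+ 2; set Sb := \sum_i b i ^+ 2; set Sab := \sum_i a i * b i.
have Sb0 : 0 <= Sb by apply: sumr_ge0 => i _; exact: sqr_ge0.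
have [Sbz|Sbnz] := eqVneq Sb 0.
  have bz i : b i = 0.
    apply/eqP; rewrite -sqrf_eq0; apply/eqP.
    by apply: (psumr_eq0P (fun i _ => sqr_ge0 (b i)) Sbz).
  have -> : Sab = 0 by rewrite /Sab big1 // => i _; rewrite bz mulr0.
  by rewrite expr0n /= mulr_ge0 // sumr_ge0 // => i _; exact: sqr_ge0.
have Sbp : 0 < Sb by rewrite lt_def Sbnz.
set t := Sab / Sb.
have E : \sum_i (a i - t * b i) ^+ 2 = Sa - 2 * t * Sab + t ^+ 2 * Sb.
  rewrite /Sa /Sab /Sb mulr_sumr mulr_sumr -sumrB -big_split /=.
  by apply: eq_bigr => i _; ring.
have H : 0 <= Sa - 2 * t * Sab + t ^+ 2 * Sb.
  by rewrite -E sumr_ge0 // => i _; exact: sqr_ge0.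
clearbody Sa Sb Sab.
have key : Sa * Sb - Sab ^+ 2 = Sb * (Sa - 2 * t * Sab + t ^+ 2 * Sb).
  by rewrite /t; field.
by rewrite -subr_ge0 key mulr_ge0 // ltW.
Qed.

Lemma mulmx_sqn {m n} (W : 'M[R]_(m, n)) (v : 'cV[R]_n) :
  sqn (W *m v) <= fro W * sqn v.
Proof.
rewrite /sqn /fro -(pair_bigA _ (fun i j => W i j ^+ 2)) /= mulr_suml.
apply: ler_sum => i _; rewrite mxE.
exact: (CS (fun j => W i j) (fun j => v j ord0)).
Qed.

Lemma relu_sq (x y : R) : (relu x - relu y) ^+ 2 <= (x - y) ^+ 2.
Proof.
rewrite /relu /= /Num.Def.maxr.
case: (ltrP 0 x) => hx; case: (ltrP 0 y) => hy /=.
- exact: lexx.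
- by rewrite subr0 ler_pXn2r ?nnegrE //; lra.
- by rewrite -[(0 - y) ^+ 2]sqrrN -[(x - y) ^+ 2]sqrrN ler_pXn2r ?nnegrE //; lra.
- by rewrite subr0 expr0n /= sqr_ge0.
Qed.

Lemma layer_lip {m n} (W : 'M[R]_(m, n)) (b : 'cV[R]_m) (x y : 'cV[R]_n) :
  sqn (map_mx relu (W *m x + b) - map_mx relu (W *m y + b)) <= fro W * sqn (x - y).
Proof.
apply: le_trans (mulmx_sqn W (x - y)).
rewrite /sqn; apply: ler_sum => i _; rewrite mulmxBr !mxE.
apply: le_trans (relu_sq _ _) _.
by rewrite opprD addrACA subrr addr0.
Qed.

Lemma hidden_lip {d Ns L} (Phi : nnet d Ns L) (x y : 'cV[R]_d) k :
  sqn (nn_hidden d Ns L Phi x k - nn_hidden d Ns L Phi y k)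
  <= (\prod_(i < k) fro (nn_W d Ns L Phi i)) * sqn (x - y).
Proof.
elim: k => [|k IH]; first by rewrite big_ord0 mul1r.
rewrite /= big_ord_recr /=.
apply: le_trans (layer_lip _ _ _ _) _.
rewrite [X in _ <= X]mulrAC [X in _ <= X]mulrC; apply: ler_wpM2l => //; exact: fro_ge0.
Qed.

Lemma realize_lip {d Ns L} (Phi : nnet d Ns L) (x y : 'cV[R]_d) :
  (realize d Ns L Phi x - realize d Ns L Phi y) ^+ 2
  <= fro (nn_WL d Ns L Phi) * (\prod_(i < L.-1) fro (nn_W d Ns L Phi i)) * sqn (x - y).
Proof.
rewrite /realize.
set hx := nn_hidden d Ns L Phi x L.-1; set hy := nn_hidden d Ns L Phi y L.-1.
set WL := nn_WL d Ns L Phi; set bL := nn_bL d Ns L Phi.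
have e : (WL *m hx + bL) ord0 ord0 - (WL *m hy + bL) ord0 ord0
         = (WL *m (hx - hy)) ord0 ord0.
  by rewrite mulmxBr !mxE opprD addrACA subrr addr0.
rewrite e.
have -> : (WL *m (hx - hy)) ord0 ord0 ^+ 2 = sqn (WL *m (hx - hy)) by rewrite /sqn big_ord1.
apply: le_trans (mulmx_sqn _ _) _.
rewrite -mulrA; apply: ler_wpM2l; first exact: fro_ge0.
exact: hidden_lip.
Qed.

Lemma prod_powR n (F : 'I_n -> R) e :
  (forall i, 0 <= F i) -> \prod_(i < n) F i `^ e = (\prod_(i < n) F i) `^ e.
Proof.
elim: n F => [|n IH] F F0; first by rewrite !big_ord0 powR1.
rewrite !big_ord_recr /= IH // powRM //.
by apply: prodr_ge0 => i _.
Qed.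

Lemma arch_prod d Ns k :
  \prod_(i < k) ((arch d Ns i.+1 * arch d Ns i)%:R : R) * (arch d Ns k)%:R
  = d%:R * (\prod_(1 <= i < k.+1) (Ns i)%:R) ^+ 2.
Proof.
elim: k => [|k IH].
  by rewrite big_ord0 big_geq // mul1r expr1n mulr1.
rewrite big_ord_recr /= big_nat_recr //= natrM.
have -> : \prod_(i < k) ((arch d Ns i.+1 * arch d Ns i)%:R : R) *
   ((Ns k.+1)%:R * (arch d Ns k)%:R) * (Ns k.+1)%:R
  = (\prod_(i < k) ((arch d Ns i.+1 * arch d Ns i)%:R : R) * (arch d Ns k)%:R)
    * (Ns k.+1)%:R ^+ 2 by ring.
rewrite IH; ring.
Qed.

End C.


Section D.
Context {R : realType}.

Lemma fro_le_c (q : \bar R) {m n} (W : 'M[R]_(m, n)) (c : R) :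
  (1 <= q)%E -> (q <= 2%:E)%E -> 0 < c -> mx_lq q _ _ W <= c -> fro W <= c ^+ 2.
Proof.
move=> h1 h2 c0 H.
have H0 : 0 <= mx_lq q _ _ W := lq_norm_ge0 _ _ _.
apply: le_trans (lq_sq_le2 q _ (fun ij : 'I_m * 'I_n => W ij.1 ij.2) h1 h2) _.
rewrite -/(mx_lq q _ _ W) ler_pXn2r ?nnegrE ?(ltW c0) //.
Qed.

Lemma fro_le_c_ge2 (q : \bar R) {m n} (W : 'M[R]_(m, n)) (c : R) :
  (2%:E <= q)%E -> 0 < c -> mx_lq q _ _ W <= c ->
  fro W <= ((m * n)%:R) `^ qexp q * c ^+ 2.
Proof.
move=> h2 c0 H.
have H0 : 0 <= mx_lq q _ _ W := lq_norm_ge0 _ _ _.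
apply: le_trans (lq_sq_ge2 q _ (fun ij : 'I_m * 'I_n => W ij.1 ij.2) h2) _.
rewrite -/(mx_lq q _ _ W) card_prod !card_ord.
apply: ler_wpM2l; first exact: powR_ge0.
rewrite ler_pXn2r ?nnegrE ?(ltW c0) //.
Qed.

Lemma cpow (c : R) L' : (c ^+ L'.+1) ^+ 2 = c ^+ 2 * (c ^+ 2) ^+ L'.
Proof. by rewrite -!exprM -exprD; congr (_ ^+ _); lia. Qed.

Lemma prod_bound_le2 (q : \bar R) (c : R) d Ns L (Phi : nnet d Ns L) :
  (0 < L)%N -> (1 <= q)%E -> (q <= 2%:E)%E -> 0 < c -> nn_norm_le d Ns L q c Phi ->
  fro (nn_WL d Ns L Phi) * (\prod_(i < L.-1) fro (nn_W d Ns L Phi i)) <= (c ^+ L) ^+ 2.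
Proof.
case: L Phi => [//|L'] Phi _ h1 h2 c0 [HW [HWL _]] /=.
apply: le_trans (_ : c ^+ 2 * \prod_(i < L') c ^+ 2 <= _); last first.
  by rewrite prodr_const card_ord cpow.
apply: ler_pM; first exact: fro_ge0.
- by apply: prodr_ge0 => i _; exact: fro_ge0.
- exact: fro_le_c h1 h2 c0 HWL.
- apply: ler_prod => i _; rewrite fro_ge0 /=.
  by apply: fro_le_c h1 h2 c0 _; case: (HW i (ltn_ord i)).
Qed.

Lemma prod_bound_ge2 (q : \bar R) (c : R) d Ns L (Phi : nnet d Ns L) :
  (0 < L)%N -> (2%:E <= q)%E -> 0 < c -> nn_norm_le d Ns L q c Phi ->
  fro (nn_WL d Ns L Phi) * (\prod_(i < L.-1) fro (nn_W d Ns L Phi i))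
  <= (c ^+ L) ^+ 2 * (d%:R * (\prod_(1 <= i < L) (Ns i)%:R) ^+ 2) `^ qexp q.
Proof.
case: L Phi => [//|L'] Phi _ h2 c0 [HW [HWL _]] /=.
set e := qexp q.
set A := fun i : 'I_L' => ((arch d Ns i.+1 * arch d Ns i)%:R : R).
have A0 i : 0 <= A i by rewrite /A ler0n.
apply: le_trans (_ : ((1 * arch d Ns L')%:R) `^ e * c ^+ 2 *
                     \prod_(i < L') (A i `^ e * c ^+ 2) <= _).
  apply: ler_pM; first exact: fro_ge0.
  - by apply: prodr_ge0 => i _; exact: fro_ge0.
  - exact: fro_le_c_ge2 h2 c0 HWL.
  - apply: ler_prod => i _; rewrite fro_ge0 /=.
    by apply: fro_le_c_ge2 h2 c0 _; case: (HW i (ltn_ord i)).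
rewrite big_split /= prodr_const card_ord prod_powR // mul1n.
rewrite -(arch_prod d Ns L') powRM ?ler0n //; last by apply: prodr_ge0.
rewrite cpow le_eqVlt; apply/orP; left; apply/eqP; ring.
Qed.

Lemma sqn_le {d} (x y : 'cV[R]_d) (rho : R) : 0 <= rho ->
  (forall i, `|x i ord0 - y i ord0| <= rho) -> sqn (x - y) <= d%:R * rho ^+ 2.
Proof.
move=> r0 H; rewrite /sqn.
apply: le_trans (_ : \sum_(i < d) rho ^+ 2 <= _); last first.
  by rewrite sumr_const card_ord mulr_natl.
apply: ler_sum => i _; rewrite !mxE -sq_abs ler_pXn2r ?nnegrE //.
Qed.

Lemma sq_to_abs (u v : R) : 0 <= v -> u ^+ 2 <= v ^+ 2 -> `|u| <= v.
Proof. by move=> v0; rewrite -sq_abs ler_pXn2r ?nnegrE. Qed.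

Lemma lip_final d Ns L (Phi : nnet d Ns L) (x y : 'cV[R]_d) (K rho : R) :
  0 <= K -> 0 <= rho ->
  fro (nn_WL d Ns L Phi) * (\prod_(i < L.-1) fro (nn_W d Ns L Phi i)) <= K ^+ 2 ->
  (forall i, `|x i ord0 - y i ord0| <= rho) ->
  `|realize d Ns L Phi x - realize d Ns L Phi y| <= K * Num.sqrt d%:R * rho.
Proof.
move=> K0 r0 HK Hxy.
apply: sq_to_abs; first by rewrite !mulr_ge0 ?sqrtr_ge0.
apply: le_trans (realize_lip Phi x y) _.
rewrite !exprMn sqr_sqrtr ?ler0n //.
apply: le_trans (_ : K ^+ 2 * (d%:R * rho ^+ 2) <= _); last by rewrite mulrA.
apply: ler_pM => //.
- by rewrite mulr_ge0 // ?fro_ge0 // prodr_ge0 // => i _; exact: fro_ge0.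
- exact: sqn_ge0.
- exact: sqn_le.
Qed.

End D.


Section E.
Context {R : realType}.

Lemma mx_le_norm {m n} (M : 'M[R]_(m, n)) i j : `|M i j| <= `|M|.
Proof.
rewrite [X in _ <= X]mx_normrE.
exact: (le_bigmax 0 (fun ij : 'I_m * 'I_n => `|M ij.1 ij.2|) (i, j)).
Qed.

Lemma mx_norm_lt {m n} (M : 'M[R]_(m, n)) r :
  0 < r -> (forall i j, `|M i j| < r) -> `|M| < r.
Proof.
move=> r0 H; rewrite [X in X < _]mx_normrE.
by apply/bigmax_ltP; split => // ij _; exact: H.
Qed.

Lemma mx_norm_le {m n} (M : 'M[R]_(m, n)) r :
  0 <= r -> (forall i j, `|M i j| <= r) -> `|M| <= r.
Proof.
move=> r0 H; rewrite [X in X <= _]mx_normrE.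
by apply/bigmax_leP; split => // ij _; exact: H.
Qed.

Lemma open_nball d (p : 'cV[R]_d) (r : R) : open [set x | `|p - x| < r].
Proof.
have -> : [set x | `|p - x| < r] = ball p r by rewrite mx_norm_ball.
exact: ball_open.
Qed.

Definition ccube d : 'cV[R]_d := const_mx (2^-1).

Lemma cubeE d : @cube R d = closed_ball (ccube d) (2^-1).
Proof.
rewrite closed_ballE ?invr_gt0 //.
apply/seteqP; split => x /=.
- move=> H; apply: mx_norm_le; first by rewrite invr_ge0.
  move=> i j; rewrite !mxE (ord1 j); have := H i; case/andP => h0 h1.
  rewrite ler_norml; apply/andP; split; lra.
- move=> H i; have := mx_le_norm (ccube d - x) i ord0.
  move=> /le_trans /(_ H); rewrite !mxE ler_norml => /andP [h0 h1].
  apply/andP; split; lra.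
Qed.

Lemma cube_closed d : closed (@cube R d).
Proof. rewrite cubeE; exact: closed_ball_closed. Qed.

Lemma borel_cubeI d (O : set 'cV[R]_d) : open O -> borel d (cube d `&` O).
Proof.
move=> oO.
have [S0 SC SU] := smallest_sigma_algebra (@setT 'cV[R]_d) [set O : set 'cV[R]_d | open O].
set G := smallest _ _ in S0 SC SU *.
rewrite /borel -/G.
have GO : forall A, open A -> G A by move=> A oA; exact: sub_sigma_algebra.
have GC : forall A, G A -> G (~` A) by move=> A GA; rewrite -setTD; exact: SC.
have GU : forall A B, G A -> G B -> G (A `|` B).
  move=> A B GA GB.
  have -> : A `|` B = \bigcup_k (if k is 0 then A else B).
    apply/seteqP; split => x /=.
    - by case => h; [exists 0%N | exists 1%N].
    - by case => -[_ h|k _ h]; [left|right].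
  by apply: SU => -[|k].
have -> : cube d `&` O = ~` (~` O `|` ~` cube d).
  by rewrite setCU !setCK setIC.
apply: (GC); apply: (GU); last by apply: (GO); exact: closed_openC (cube_closed d).
apply: (GC); exact: (GO).
Qed.

Lemma Linf_norm_le d (g : 'cV[R]_d -> R) (M : R) : (0 < d)%N ->
  (forall x, cube d x -> `|g x| <= M) -> (Linf_norm d g <= M%:E)%E.
Proof.
move=> d0 H; apply: ereal_inf_lbound; exists M => //.
move=> eps eps0; exists (fun _ => 0), (fun _ => 0); split; first by move=> k i; rewrite mxE.
split.
  move=> x [cx Mx]; exfalso; have := H x cx; rewrite leNgt Mx //.
move=> n; rewrite big1 ?ltW // => k _.
under eq_bigr do rewrite !mxE subrr.
by rewrite prodr_const card_ord expr0n eqn0Ngt d0.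
Qed.

Definition Gx (r b : R) {d} (s : seq ('cV[R]_d * R)) (x : 'cV[R]_d) : R :=
  foldr (fun pv acc => if `|pv.1 - x| < r then Num.max pv.2 acc else acc) b s.
Arguments Gx : simpl never.

Lemma Gx_cons r b d pv s x : @Gx r b d (pv :: s) x =
  if `|pv.1 - x| < r then Num.max pv.2 (Gx r b s x) else Gx r b s x.
Proof. by []. Qed.

Lemma G_ge_b r b d s x : b <= @Gx r b d s x.
Proof.
elim: s => [|pv s IH]; first by rewrite /Gx.
rewrite Gx_cons; case: ifP => _ //.
by rewrite le_max IH orbT.
Qed.

Lemma G_ge_mem r b d s x pv : pv \in s -> `|pv.1 - x| < r -> pv.2 <= @Gx r b d s x.
Proof.
elim: s => [//|pv' s IH]; rewrite in_cons Gx_cons => /orP [/eqP <-|h] hx.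
  by rewrite hx le_max lexx.
have := IH h hx; case: ifP => _ // H.
by rewrite le_max H orbT.
Qed.

Lemma G_le r b d s x M : b <= M ->
  (forall pv, pv \in s -> `|pv.1 - x| < r -> pv.2 <= M) -> @Gx r b d s x <= M.
Proof.
move=> bM; elim: s => [|pv s IH] H; first by rewrite /Gx.
rewrite Gx_cons.
have IH' : Gx r b s x <= M by apply: IH => pv' h; apply: H; rewrite in_cons h orbT.
case: ifP => hx //; rewrite ge_max IH' andbT.
by apply: H => //; rewrite in_cons eqxx.
Qed.



Lemma G_open r b d s (a : R) : open [set x | a < @Gx r b d s x].
Proof.
elim: s => [|pv s IH].
  have -> : [set x | a < @Gx r b d [::] x] = if a < b then setT else set0.
    by apply/seteqP; split => x /=; rewrite /Gx /=; case: ifP.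
  by case: ifP => _; [exact: openT | exact: open0].
have -> : [set x | a < Gx r b (pv :: s) x]
  = [set x | a < Gx r b s x] `|` (if a < pv.2 then [set x | `|pv.1 - x| < r] else set0).
  apply/seteqP; split => x /=; rewrite Gx_cons.
  - case: ifP => hx; last by left.
    rewrite lt_max => /orP [h|h]; last by left.
    by right; rewrite h.
  - case => [h|]; first by case: ifP => // _; rewrite lt_max h orbT.
    case: ifP => // ha hx; rewrite hx lt_max ha //.
apply: openU => //; case: ifP => _; [exact: open_nball | exact: open0].
Qed.

Definition Bs {d} (s : seq ('cV[R]_d * R)) : R := \sum_(pv <- s) `|pv.2|.

Lemma Bs_ge0 {d} s : 0 <= @Bs d s.
Proof. by apply: sumr_ge0 => pv _. Qed.

Lemma Bs_mem {d} s pv : pv \in s -> `|pv.2| <= @Bs d s.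
Proof.
rewrite /Bs; elim: s => [//|pv' s IH]; rewrite in_cons big_cons => /orP [/eqP <-|h].
  by rewrite lerDl sumr_ge0.
by apply: le_trans (IH h) _; rewrite lerDr.
Qed.

Definition Qf (r : R) {d} (s : seq ('cV[R]_d * R)) : 'cV[R]_d -> R :=
  Gx r (- Bs s) s.

Lemma Qf_bound r d s x : `|@Qf r d s x| <= Bs s.
Proof.
rewrite ler_norml; apply/andP; split; first exact: G_ge_b.
apply: G_le; first by have := Bs_ge0 s; lra.
by move=> pv h _; apply: le_trans (Bs_mem s pv h); exact: ler_norm.
Qed.

Lemma Qf_Linf r d s : (0 < d)%N -> Linf d (@Qf r d s).
Proof.
move=> d0; split.
  by move=> a; apply: borel_cubeI; exact: G_open.
have H := Linf_norm_le d (Qf r s) (Bs s) d0 (fun x _ => Qf_bound r d s x).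
exact: (le_lt_trans H (ltry _)).
Qed.

Lemma samples_size d f (u : 'cV[R]_d -> R) k : size (samples d f u k) = k.
Proof. by elim: k => //= k IH; rewrite size_rcons IH. Qed.

Lemma samples_nth d f (u : 'cV[R]_d -> R) m k x0 : (k < m)%N ->
  nth x0 (samples d f u m) k = (f (samples d f u k), u (f (samples d f u k))).
Proof.
elim: m => [//|m IH] km /=.
rewrite nth_rcons samples_size.
case: (ltngtP k m) => h.
- exact: IH.
- by move: km; rewrite ltnS leqNgt h.
- by rewrite h.
Qed.

Lemma samples_val d f (u : 'cV[R]_d -> R) m pv :
  pv \in samples d f u m -> pv.2 = u pv.1.
Proof.
elim: m => [//|m IH] /=; rewrite mem_rcons in_cons => /orP [/eqP -> //|h].
exact: IH.
Qed.

End E.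


Lemma grid_exists d m : (0 < d)%N -> (0 < m)%N ->
  exists n, [/\ (0 < n)%N, (n ^ d <= m)%N & (m < n.+1 ^ d)%N].
Proof.
move=> d0; case: m => [//|m] _; elim: m => [|m [n [n0 h1 h2]]].
  exists 1%N; split => //; first by rewrite exp1n.
  by have := ltn_exp2r 1 2 d0; rewrite exp1n => ->.
case: (ltnP m.+2 (n.+1 ^ d)) => h.
  by exists n; split => //; apply: leq_trans h1 (leqnSn _).
exists n.+1; split => //.
have e : (m.+2 = n.+1 ^ d)%N by apply/eqP; rewrite eqn_leq h2 h.
by rewrite e ltn_exp2r.
Qed.

Section F.
Context {R : realType}.

Definition gpt {N d : nat} (J : {ffun 'I_d -> 'I_N}) : 'cV[R]_d :=
  \col_i ((2 * ((J i : nat)%:R) + 1) / (2 * N%:R)).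

Definition gf (N d : nat) (s : seq ('cV[R]_d * R)) : 'cV[R]_d :=
  nth 0 [seq gpt J | J <- enum {ffun 'I_d -> 'I_N}] (size s).

Lemma gpt_cube N d J : (0 < N)%N -> cube d (@gpt N d J).
Proof.
move=> N0 i; rewrite mxE.
have Nr : 0 < (N%:R : R) by rewrite ltr0n.
have jN : ((J i : nat)%:R : R) + 1 <= N%:R.
  by rewrite natr1 ler_nat ltn_ord.
apply/andP; split.
  by rewrite divr_ge0 // ?addr_ge0 ?mulr_ge0 // ltW // mulr_gt0.
by rewrite ler_pdivrMr ?mulr_gt0 // mul1r; lra.
Qed.

Lemma gf_cube N d s : (0 < N)%N -> cube d (@gf N d s).
Proof.
move=> N0; rewrite /gf.
case: (ltnP (size s) (size [seq @gpt N d J | J <- enum {ffun 'I_d -> 'I_N}])) => h.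
  have := mem_nth 0 h; move/mapP => [J _ ->]; exact: gpt_cube.
rewrite nth_default // => i; rewrite mxE lexx ler01 //.
Qed.

Lemma grid_close N d (x : 'cV[R]_d) : (0 < N)%N -> cube d x ->
  exists J : {ffun 'I_d -> 'I_N}, forall i, `|gpt J i ord0 - x i ord0| < N%:R^-1.
Proof.
case: N => [//|N'] _ cx.
set N := N'.+1.
have Nr : 0 < (N%:R : R) by rewrite ltr0n.
pose j i := minn (Num.Def.trunc (N%:R * x i ord0)) N'.
exists [ffun i => inord (j i)] => i.
rewrite mxE ffunE inordK; last by rewrite ltnS geq_minr.
have [x0 x1] : 0 <= x i ord0 /\ x i ord0 <= 1 by move/andP: (cx i).
have hb : ((j i)%:R : R) <= N%:R * x i ord0 <= (j i)%:R + 1.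
  have /andP [t1 t2] := truncn_itv (mulr_ge0 (ltW Nr) x0).
  rewrite /j /=; case: (leqP (Num.Def.trunc (N%:R * x i ord0)) N') => h.
    rewrite t1 /= natr1; exact: ltW.
  apply/andP; split.
    apply: le_trans t1; rewrite ler_nat; exact: ltnW.
  have : N%:R * x i ord0 <= N%:R * 1 by rewrite ler_wpM2l // ltW.
  by rewrite mulr1 /N -natr1.
have e : (2 * (j i)%:R + 1) / (2 * N%:R) - x i ord0
         = ((2 * (j i)%:R + 1) / 2 - N%:R * x i ord0) / N%:R.
  by field; rewrite gt_eqF.
rewrite e normrM (@gtr0_norm _ (N%:R^-1)) ?invr_gt0 // -[X in _ < X]mul1r ltr_pM2r ?invr_gt0 //.
move/andP: hb => [hb1 hb2].
rewrite ltr_norml; apply/andP; split; lra.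
Qed.

Lemma rate N m d : (0 < N)%N -> (0 < d)%N -> (0 < m)%N -> (m < N.+1 ^ d)%N ->
  (N%:R : R)^-1 <= 2 * (m%:R) `^ (- (d%:R)^-1).
Proof.
move=> N0 d0 m0 hm.
have Nr : 0 < (N%:R : R) by rewrite ltr0n.
have mr : 0 < (m%:R : R) by rewrite ltr0n.
set y := (m%:R : R) `^ (d%:R)^-1.
have y0 : 0 < y by rewrite /y powR_gt0.
have hy : y <= 2 * N%:R.
  have hmd : (m%:R : R) <= (2 * N%:R) ^+ d.
    rewrite -natrM -natrX ler_nat; apply: ltnW; apply: leq_trans hm _.
    by rewrite leq_exp2r //; lia.
  rewrite /y; apply: le_trans (_ : ((2 * N%:R) ^+ d) `^ (d%:R)^-1 <= _).
    by apply: ge0_ler_powR; rewrite ?nnegrE ?invr_ge0 ?ler0n ?(ltW mr) ?exprn_ge0 ?mulr_ge0.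
  have h2N : 0 <= 2 * (N%:R : R) by rewrite mulr_ge0.
  rewrite -powR_mulrn // -powRrM mulfV; last by rewrite pnatr_eq0 -lt0n.
  by rewrite powRr1.
rewrite powRN -/y -subr_ge0.
have -> : 2 * y^-1 - N%:R^-1 = (2 * N%:R - y) / (y * N%:R).
  by field; rewrite ?gt_eqF.
by rewrite divr_ge0 ?subr_ge0 // mulr_ge0 // ltW.
Qed.

Lemma meas_prop {d0} {T : measurableType d0} (P : Prop) : measurable [set _ : T | P].
Proof.
case: (pselect P) => h.
  by rewrite (_ : [set _ : T | P] = setT); [exact: measurableT | apply/seteqP; split].
by rewrite (_ : [set _ : T | P] = set0); [exact: measurable0 | apply/seteqP; split].
Qed.

End F.


Section G.
Context {R : realType}.

Lemma approx d Ns L (Phi : nnet d Ns L) (K : R) N m (x : 'cV[R]_d) :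
  (0 < d)%N -> (0 < N)%N -> (N ^ d <= m)%N -> 0 <= K ->
  fro (nn_WL d Ns L Phi) * (\prod_(i < L.-1) fro (nn_W d Ns L Phi i)) <= K ^+ 2 ->
  cube d x ->
  `|realize d Ns L Phi x - Qf (N%:R^-1) (samples d (gf N d) (realize d Ns L Phi) m) x|
    <= K * Num.sqrt d%:R * N%:R^-1.
Proof.
move=> d0 N0 hNm K0 HK cx.
set u := realize d Ns L Phi.
set r := (N%:R : R)^-1.
set E := K * Num.sqrt d%:R * r.
set s := samples d (gf N d) u m.
have r0 : 0 <= r by rewrite invr_ge0 ler0n.
have lip p : `|p - x| < r -> `|u p - u x| <= E.
  move=> hp; apply: lip_final => // i.
  have := mx_le_norm (p - x) i ord0; rewrite !mxE => h.
  apply: le_trans h _; exact: ltW.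
have [J hJ] := grid_close N d x N0 cx.
pose p0 : 'cV[R]_d := gpt J.
have hp0 : `|p0 - x| < r.
  apply: mx_norm_lt => [|i j]; first by rewrite invr_gt0 ltr0n.
  rewrite (ord1 j); have := hJ i; by rewrite /p0 !mxE.
set k := index J (enum {ffun 'I_d -> 'I_N}).
have kT : (k < #|{ffun 'I_d -> 'I_N}|)%N by rewrite cardE index_mem mem_enum.
have km : (k < m)%N.
  by apply: leq_trans kT _; rewrite card_ffun !card_ord.
have hpv : (p0, u p0) \in s.
  have e := samples_nth d (gf N d) u m k (0, 0) km.
  have gk : gf N d (samples d (gf N d) u k) = p0.
    rewrite /gf samples_size (nth_map J); last by rewrite -cardE.
    by rewrite nth_index // mem_enum.
  rewrite -gk -e; apply: mem_nth; by rewrite samples_size.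
have hl := lip p0 hp0.
rewrite ler_norml in hl; move/andP: hl => [hl1 hl2].
have upper : Qf r s x <= u x + E.
  rewrite /Qf; apply: G_le.
    have := Bs_mem s (p0, u p0) hpv; rewrite /= ler_norml => /andP [h1 h2].
    lra.
  move=> pv hpv' hin.
  rewrite (samples_val _ _ _ _ _ hpv').
  have := lip _ hin; rewrite ler_norml => /andP [_ h]; lra.
have lower : u x - E <= Qf r s x.
  have := G_ge_mem r (- Bs s) d s x (p0, u p0) hpv hp0; rewrite /= => h.
  rewrite /Qf; lra.
rewrite ler_norml; apply/andP; split; lra.
Qed.

Lemma main_general (q : \bar R) (c : R) d Ns L m N (K : R) :
  (0 < d)%N -> (0 < N)%N -> (N ^ d <= m)%N -> 0 <= K ->
  (forall Phi : nnet d Ns L, nn_norm_le d Ns L q c Phi ->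
     fro (nn_WL d Ns L Phi) * (\prod_(i < L.-1) fro (nn_W d Ns L Phi i)) <= K ^+ 2) ->
  (errMC d (Hclass q d Ns L c) m <= (K * Num.sqrt d%:R * N%:R^-1)%:E)%E.
Proof.
move=> d0 N0 hNm K0 HK.
set r := (N%:R : R)^-1.
pose Aalg := fun u : 'cV[R]_d -> R => Qf r (samples d (gf N d) u m).
apply: ge_ereal_inf.
exists (ereal_sup [set (\int[\d_(0%R : R)]_w Linf_norm d (u \- (fun _ : R => Aalg) w u)%R)%E
                  | u in Hclass q d Ns L c]).
  exists _, R, \d_(0%R : R), (fun _ => Aalg), (fun _ => m); split => //.
  split; [|split; [|split]].
  - move=> n; exact: meas_prop.
  - have -> : (\int[\d_(0%R : R)]_w ((m%:R)%:E) = (m%:R)%:E * \d_(0%R : R) setT)%E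
      := integral_cst _ measurableT _.
    by rewrite probability_setT mule1.
  - move=> u _ O _; exact: meas_prop.
  - move=> w; exists (gf N d), (fun s => Qf r s); split.
      move=> s; exact: gf_cube.
    split => // s; exact: Qf_Linf.
apply: ge_ereal_sup => y [u [Phi [HPhi ->]] <-].
have -> : (\int[\d_(0%R : R)]_w Linf_norm d (realize d Ns L Phi \- (fun _ : R => Aalg) w (realize d Ns L Phi))%R
   = Linf_norm d (realize d Ns L Phi \- Aalg (realize d Ns L Phi))%R * \d_(0%R : R) setT)%E
  := integral_cst _ measurableT _.
rewrite probability_setT mule1.
apply: Linf_norm_le => // x cx.
by apply: approx => //; exact: HK.
Qed.

End G.


Lemma powR_sq (R : realType) (x e : R) : 0 <= x -> (x `^ e) ^+ 2 = (x ^+ 2) `^ e.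
Proof.
move=> x0; rewrite -!powR_mulrn ?powR_ge0 // -!powRrM; congr (_ `^ _); exact: mulrC.
Qed.

Theorem theorem2p7 (R : realType) (L d : nat) (q : \bar R) (c : R) (Ns : nat -> nat) :
  (0 < L)%N -> (0 < d)%N -> (1 <= q)%E -> 0 < c ->
  (forall i : nat, (0 < i < L)%N -> (0 < Ns i)%N) ->
  forall m : nat, (0 < m)%N ->
  ((q <= 2%:E)%E ->
     (errMC d (Hclass q d Ns L c) m <=
      (2 * Num.sqrt (d%:R) * c ^+ L * powR (m%:R) (- (d%:R)^-1))%:E)%E) /\
  ((2%:E <= q)%E ->
     (errMC d (Hclass q d Ns L c) m <=
      (2 * Num.sqrt (d%:R) * c ^+ L
         * powR (Num.sqrt (d%:R) * \prod_(1 <= i < L) (Ns i)%:R) (qexp q)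
         * powR (m%:R) (- (d%:R)^-1))%:E)%E).
Proof.
move=> L0 d0 q1 c0 HN m m0.
have [N [N0 hN1 hN2]] := grid_exists d m d0 m0.
have hr := @rate R N m d N0 d0 m0 hN2.
have sd0 : 0 <= Num.sqrt (d%:R : R) by exact: sqrtr_ge0.
have cL0 : 0 <= c ^+ L by rewrite exprn_ge0 // ltW.
split => hq.
  apply: le_trans (main_general q c d Ns L m N (c ^+ L) d0 N0 hN1 cL0 _) _.
    by move=> Phi HPhi; exact: prod_bound_le2 L0 q1 hq c0 HPhi.
  rewrite lee_fin.
  apply: le_trans (ler_wpM2l _ hr) _; first by rewrite mulr_ge0.
  rewrite le_eqVlt; apply/orP; left; apply/eqP; ring.
set P := \prod_(1 <= i < L) ((Ns i)%:R : R).
have P0 : 0 <= P by rewrite /P prodr_ge0 // => i _; exact: ler0n.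
set K := c ^+ L * (Num.sqrt d%:R * P) `^ qexp q.
have K0 : 0 <= K by rewrite /K mulr_ge0 // powR_ge0.
apply: le_trans (main_general q c d Ns L m N K d0 N0 hN1 K0 _) _.
  move=> Phi HPhi; apply: le_trans (prod_bound_ge2 q c d Ns L Phi L0 hq c0 HPhi) _.
  rewrite /K exprMn powR_sq ?mulr_ge0 // exprMn sqr_sqrtr ?ler0n //.
rewrite lee_fin.
apply: le_trans (ler_wpM2l _ hr) _; first by rewrite mulr_ge0.
rewrite le_eqVlt; apply/orP; left; apply/eqP; rewrite /K; ring.
Qed.
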